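(* Let $C_3=\{000,111\}$ and let $$C_7=\{\bm{x}\,\|\,(\pi(\bm{x})+1)\,\|\,(\bm{x}+\bm{c}) : \bm{x}\in\mathbb{B}_3,\ \bm{c}\in C_3\}\subseteq \mathbb{B}_7 .$$ Then $C_7$ is a perfect code in the graph $\Gamma_7(1^5)$.
   Context: $\mathbb{B}_k$ is the set of binary strings of length $k$, identified with vectors of $\mathbb{Z}_2^k$; $\bm{x}+\bm{c}$ is the coordinatewise sum modulo 2, $\pi(x_1\dots x_k)=x_1+\dots+x_k \pmod 2$ is the parity, and $\|$ denotes concatenation (the middle term is a single bit). The $n$-cube $Q_n$ has vertex set $\mathbb{B}_n$, two strings adjacent if they differ in exactly one position. $\Gamma_n(1^s)$ is the subgraph of $Q_n$ induced by strings not containing $1^s$ (the string of $s$ consecutive 1's) as a substring (i.e. as a block of consecutive positions). A perfect code in a graph $G$ is a set $C$ of vertices such that every vertex of $G$ lies in the closed neighbourhood $N[c]=\{v: d_G(c,v)\le 1\}$ of exactly one $c\in C$. *)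

(* Defs.v *)
From mathcomp Require Import all_boot.
Set Implicit Arguments. Unset Strict Implicit. Unset Printing Implicit Defensive.

Definition word (k : nat) := k.-tuple bool.

Definition wadd k (x y : word k) : word k := [tuple of map (fun p => p.1 (+) p.2) (zip x y)].

Definition parity k (x : word k) : bool := foldr addb false x.

Definition hamming k (x y : word k) : nat := count id (map (fun p => p.1 != p.2) (zip x y)).

Definition cube_adj n (x y : word n) : bool := hamming x y == 1.

Definition ones s : seq bool := nseq s true.

Definition contains_ones s (x : seq bool) : bool := infix (ones s) x.

Definition gamma_vertex n s (x : word n) : bool := ~~ contains_ones s x.

Definition gamma_closed_nbhd n s (c v : word n) : bool :=
  [&& gamma_vertex s c, gamma_vertex s v & (v == c) || cube_adj c v].

Definition perfect_code_gamma n s (C : {set word n}) : Prop :=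
  (forall c, c \in C -> gamma_vertex s c) /\
  (forall v : word n, gamma_vertex s v ->
     #|[set c in C | gamma_closed_nbhd s c v]| = 1).

Definition cat3 (x : word 3) (b : bool) (y : word 3) : word 7 :=
  [tuple of x ++ b :: y].

Definition C3 : {set word 3} :=
  [set [tuple false; false; false]; [tuple true; true; true]].

Definition C7 : {set word 7} :=
  [set cat3 x (parity x (+) true) (wadd x c) | x in [set: word 3], c in C3].

(* Main.v *)
Require Import Defs.
From mathcomp Require Import all_boot.

Fixpoint allw n : seq (n.-tuple bool) :=
  match n with
  | 0 => [:: [tuple]]
  | n'.+1 => flatten [seq [seq cons_tuple b t | t <- allw n'] | b <- [:: false; true]]
  end.

Lemma allwP n (x : n.-tuple bool) : x \in allw n.
Proof.
elim: n x => [|n IH] x; first by rewrite tuple0 inE.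
case/tupleP: x => b t /=.
have H : [tuple of b :: t] \in [seq cons_tuple b t0 | t0 <- allw n].
  by apply/mapP; exists t => //; apply: val_inj.
by case: b H; rewrite !mem_cat => ->; rewrite ?orbT.
Qed.

Lemma card_count n (A : pred (n.-tuple bool)) : uniq (allw n) ->
  #|A| = count A (allw n).
Proof.
move=> U. rewrite -size_filter -(card_uniqP (filter_uniq A U)).
by apply: eq_card => x; rewrite mem_filter allwP andbT.
Qed.

Definition t0 : word 3 := [tuple false; false; false].
Definition t1 : word 3 := [tuple true; true; true].
Definition C7s : seq (word 7) :=
  flatten [seq [seq cat3 x (parity x (+) true) (wadd x c) | c <- [:: t0; t1]] | x <- allw 3].

Lemma memC7 v : (v \in C7) = (v \in C7s).
Proof.
apply/imset2P/flattenP.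
  case=> x c _ Hc ->.
  exists [seq cat3 x (parity x (+) true) (wadd x c) | c <- [:: t0; t1]].
    by apply/mapP; exists x => //; apply: allwP.
  apply: (map_f (fun c => cat3 x (parity x (+) true) (wadd x c))).
  by move: Hc; rewrite /C3 !inE.
case=> s /mapP[x _ ->] /mapP[c Hc ->].
apply: (Imset2spec (x1:=x) (x2:=c)) => //.
by move: Hc; rewrite /C3 !inE.
Qed.

Lemma U7 : uniq (allw 7). Proof. by vm_compute. Qed.

Lemma Acomp : all (fun c => gamma_vertex 5 c) C7s. Proof. by vm_compute. Qed.
Lemma Bcomp : all (fun v => gamma_vertex 5 v ==>
   (count (fun c => (c \in C7s) && gamma_closed_nbhd 5 c v) (allw 7) == 1)) (allw 7).
Proof. by vm_compute. Qed.

Theorem mainTheorem4 : perfect_code_gamma 5 C7.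
Proof. split.
- by move=> c; rewrite memC7 => Hc; move/allP: Acomp => /(_ c Hc).
- move=> v Hv; apply/eqP; move/allP: Bcomp => /(_ v (allwP _ v)); rewrite Hv /=.
  rewrite card_count ?U7 //.
  have -> : count (mem [set c in C7 | gamma_closed_nbhd 5 c v]) (allw 7) =
     count (fun c => (c \in C7s) && gamma_closed_nbhd 5 c v) (allw 7).
    by apply: eq_count => c; rewrite /= inE memC7.
  done.
Qed.
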